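(* Let $P=\frac{1}{\sqrt2}\begin{bmatrix}1&1\\0&0\end{bmatrix}$, $Q=\frac{1}{\sqrt2}\begin{bmatrix}0&0\\1&-1\end{bmatrix}$, $R=\sqrt2\,PQ=\frac{1}{\sqrt2}\begin{bmatrix}1&-1\\0&0\end{bmatrix}$, $S=\sqrt2\,QP=\frac{1}{\sqrt2}\begin{bmatrix}0&0\\1&1\end{bmatrix}$. For integers $l,m\ge0$ with $l+m=n\ge1$, let $\Xi(l,m)$ denote the sum of all distinct products $A_1A_2\cdots A_n$ with each $A_j\in\{P,Q\}$, exactly $l$ of them equal to $P$ and exactly $m$ equal to $Q$ (so $\binom{n}{l}$ terms). Then: (i) if $\min\{l,m\}\ge1$, $$\Xi(l,m)=\Big(\tfrac{1}{\sqrt2}\Big)^{n-1}(-1)^m\sum_{\gamma=1}^{\min\{l,m\}}(-1)^\gamma\binom{l-1}{\gamma-1}\binom{m-1}{\gamma-1}\Big[\tfrac{l-\gamma}{\gamma}P-\tfrac{m-\gamma}{\gamma}Q+R+S\Big];$$ (ii) if $l=n\ge1$ and $m=0$, $\Xi(l,0)=\big(\tfrac{1}{\sqrt2}\big)^{l-1}P$; (iii) if $l=0$ and $m=n\ge1$, $\Xi(0,m)=\big(\tfrac{1}{\sqrt2}\big)^{m-1}(-1)^{m+1}Q$.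
   Context: $P$ and $Q$ are the two parts of the Hadamard matrix $H=\frac{1}{\sqrt2}\begin{bmatrix}1&1\\1&-1\end{bmatrix}=P+Q$ governing the one-dimensional Hadamard walk, and $\Xi(l,m)$ is the coefficient of the word-sum appearing in the expansion of $H^n=(P+Q)^n$ (a ''quantum Pascal's triangle''). *)

(* Defs.v *)
From HB Require Import structures.
From mathcomp Require Import all_boot all_order all_algebra.
Set Implicit Arguments. Unset Strict Implicit. Unset Printing Implicit Defensive.
Import Order.TTheory GRing.Theory Num.Theory.
Local Open Scope ring_scope.

Section Hadamard.
Variable R : rcfType.

Definition isq2 : R := (Num.sqrt (2%:R : R))^-1.

Definition Pm : 'M[R]_2 :=
  \matrix_(i < 2, j < 2) (if i == 0 :> nat then isq2 else 0).
Definition Qm : 'M[R]_2 :=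
  \matrix_(i < 2, j < 2)
    (if i == 1 :> nat then (if j == 0 :> nat then isq2 else - isq2) else 0).
Definition Rm : 'M[R]_2 := Num.sqrt (2%:R : R) *: (Pm *m Qm).
Definition Sm : 'M[R]_2 := Num.sqrt (2%:R : R) *: (Qm *m Pm).

Definition Xi (l m : nat) : 'M[R]_2 :=
  \sum_(w : (l + m).-tuple bool | count id w == l)
     \prod_(b <- w) (if b then Pm else Qm).
End Hadamard.

(* Main.v *)
Require Import Defs.
From HB Require Import structures.
From mathcomp Require Import all_boot all_order all_algebra.
From mathcomp Require Import ring zify.
Set Implicit Arguments. Unset Strict Implicit. Unset Printing Implicit Defensive.
Import Order.TTheory GRing.Theory Num.Theory.
Local Open Scope ring_scope.

Section S.
Variable R : rcfType.
Local Notation c := (isq2 R).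

Definition Y n l : 'M[R]_2 :=
  \sum_(w : n.-tuple bool | count id w == l) \prod_(b <- w) (if b then Pm R else Qm R).

Lemma Y_S n l : Y n.+1 l = (if l is l'.+1 then Pm R * Y n l' else 0) + Qm R * Y n l.
Proof.
rewrite /Y (reindex (fun p : bool * n.-tuple bool => [tuple of p.1 :: p.2])) /=; last first.
  exists (fun t : n.+1.-tuple bool => (thead t, [tuple of behead t])) => [[b t]|t] _ /=.
    by congr pair; apply: val_inj.
  by apply: val_inj => /=; case: t => [[|x s]].
transitivity (\sum_(b : bool) \sum_(t : n.-tuple bool | count id (b::t) == l)
   \prod_(x <- b :: t) (if x then Pm R else Qm R)).
  by rewrite pair_big_dep /=; apply: eq_bigl => [[b t]].
rewrite big_bool /=.
under eq_bigr do rewrite big_cons.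
under [X in _ + X = _]eq_bigr do rewrite big_cons.
rewrite -!mulr_sumr; case: l => [|l].
  by rewrite [X in Pm R * X]big_pred0 ?mulr0 ?add0r.
by congr (_ * _ + _ * _); apply: eq_bigl.
Qed.

Lemma Y_big n l : (n < l)%N -> Y n l = 0.
Proof.
move=> H; rewrite /Y big_pred0 // => t; apply/negbTE; rewrite neq_ltn.
by have := count_size id t; rewrite size_tuple => /leq_ltn_trans ->.
Qed.

Lemma Y_0 : Y 0 0 = 1.
Proof.
rewrite /Y (big_pred1 [tuple]) ?big_nil // => t.
by case: t => [[|]] //= i; rewrite eqxx; apply/eqP/val_inj.
Qed.

Definition M (a b r s : R) : 'M[R]_2 :=
  \matrix_(i < 2, j < 2) (if i == 0 :> nat then (if j == 0 :> nat then a + r else a - r)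
                          else (if j == 0 :> nat then b + s else s - b)).

Ltac ent := apply/matrixP; case=> [[|[|//]] ?]; case=> [[|[|//]] ?]; rewrite !mxE /= ?mxE /=.

Lemma sq2c : Num.sqrt (2%:R : R) * c = 1.
Proof. rewrite /isq2 divff // gt_eqF // sqrtr_gt0 ltr0n //. Qed.

Lemma Pm_eq : Pm R = c *: M 1 0 0 0.
Proof. ent; ring. Qed.
Lemma Qm_eq : Qm R = c *: M 0 1 0 0.
Proof. ent; ring. Qed.

Lemma pM a b r s : M 1 0 0 0 *m M a b r s = M (a+s) 0 (b+r) 0.
Proof. ent; rewrite !big_ord_recl big_ord0 /= !mxE /=; ring. Qed.
Lemma qM a b r s : M 0 1 0 0 *m M a b r s = M 0 (r-b) 0 (a-s).
Proof. ent; rewrite !big_ord_recl big_ord0 /= !mxE /=; ring. Qed.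

Lemma Rm_eq : Rm R = c *: M 0 0 1 0.
Proof.
rewrite /Rm Pm_eq Qm_eq -scalemxAl -scalemxAr !scalerA pM sq2c mul1r.
by rewrite !(addr0, add0r).
Qed.
Lemma Sm_eq : Sm R = c *: M 0 0 0 1.
Proof.
rewrite /Sm Pm_eq Qm_eq -scalemxAl -scalemxAr !scalerA qM sq2c mul1r.
by rewrite !subr0.
Qed.

Lemma MD a b r s a' b' r' s' :
  M a b r s + M a' b' r' s' = M (a+a') (b+b') (r+r') (s+s').
Proof. ent; ring. Qed.
Lemma MZ k a b r s : k *: M a b r s = M (k*a) (k*b) (k*r) (k*s).
Proof. ent; ring. Qed.

Lemma PY k a b r s : Pm R * (k *: M a b r s) = (c * k) *: M (a+s) 0 (b+r) 0.
Proof. by rewrite Pm_eq -mulmxE -scalemxAl -scalemxAr pM scalerA. Qed.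
Lemma QY k a b r s : Qm R * (k *: M a b r s) = (c * k) *: M 0 (r-b) 0 (a-s).
Proof. by rewrite Qm_eq -mulmxE -scalemxAl -scalemxAr qM scalerA. Qed.

Definition comp (n k : nat) : nat :=
  if n is n'.+1 then (if k is k'.+1 then 'C(n', k') else 0%N) else (k == 0%N : nat).

Arguments comp : simpl never.
Lemma compS n k : comp n.+1 k.+1 = (comp n k.+1 + comp n k)%N.
Proof. rewrite /comp; case: n => [|n] /=; case: k => [|k] //=; by rewrite ?bin0 ?binS ?addn0. Qed.
Lemma comp_n0 n : comp n.+1 0 = 0%N.
Proof. by rewrite /comp. Qed.
Lemma comp_0S k : comp 0 k.+1 = 0%N.
Proof. by rewrite /comp. Qed.
Lemma comp_big n k : (n < k)%N -> comp n k = 0%N.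
Proof. rewrite /comp; by case: n => [|n]; case: k => [|k] //= H; rewrite bin_small. Qed.
Lemma comp00 l m : (0 < l + m)%N -> (comp l 0 * comp m 0)%N = 0%N.
Proof. rewrite /comp; by case: l => [|l] //; case: m. Qed.

Definition sA N l m : R := \sum_(k < N) (-1)^+(m+k) * (comp l k.+1 * comp m k)%:R.
Definition sB N l m : R := \sum_(k < N) (-1)^+(m+k).+1 * (comp l k * comp m k.+1)%:R.
Definition sC N l m : R := \sum_(k < N) (-1)^+(m+k) * (comp l k * comp m k)%:R.

Lemma RA N l m : sA N l.+1 m = sA N l m + sC N l m.
Proof.
rewrite /sA /sC -big_split; apply: eq_bigr => k _.
by rewrite compS mulnDl natrD mulrDr.
Qed.

Lemma RB N l m : sB N l m.+1 = sC N l m - sB N l m.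
Proof.
rewrite /sB /sC -sumrB; apply: eq_bigr => k _.
rewrite compS mulnDr natrD addSn !exprS; ring.
Qed.

Lemma RC N l m : (0 < l + m)%N -> (l < N)%N ->
  sC N.+1 l.+1 m = sB N.+1 l m + sC N.+1 l m.
Proof.
move=> H1 H2.
rewrite /sB /sC big_ord_recl comp_n0 mul0n mulr0 add0r.
rewrite [X in X + _]big_ord_recr /= (comp_big H2) mul0n mulr0 addr0.
rewrite [X in _ + X]big_ord_recl comp00 // mulr0 add0r -big_split.
apply: eq_bigr => k _ /=; rewrite /bump add1n compS mulnDl natrD addnS !exprS; ring.
Qed.

Lemma RS N l m : (0 < l + m)%N -> (l <= N)%N ->
  sC N.+1 l m.+1 = sA N.+1 l m - sC N.+1 l m.
Proof.
move=> H1 H2.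
rewrite /sA /sC big_ord_recl comp_n0 muln0 mulr0 add0r.
rewrite [X in X - _]big_ord_recr /= (comp_big (n:=l) (k:=N.+1)) // mul0n mulr0 addr0.
rewrite [X in _ - X]big_ord_recl comp00 // mulr0 add0r -sumrB.
apply: eq_bigr => k _ /=; rewrite /bump add1n compS mulnDr natrD !addnS !addSn !exprS; ring.
Qed.

Lemma sA0 N l : sA N.+1 l.+1 0 = 1.
Proof.
rewrite /sA big_ord_recl big1 ?addr0 => [|k _]; last by rewrite /= comp_0S muln0 mulr0.
by rewrite /= /comp /= bin0 expr0 mul1r.
Qed.
Lemma sB0 N l : sB N l 0 = 0.
Proof. by rewrite /sB big1 // => k _; rewrite comp_0S muln0 mulr0. Qed.
Lemma sC0 N l : sC N l.+1 0 = 0.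
Proof.
by rewrite /sC big1 // => -[[|k] ?] _ /=; rewrite ?comp_n0 ?comp_0S ?mul0n ?muln0 mulr0.
Qed.
Lemma sA_0 N m : sA N 0 m = 0.
Proof. by rewrite /sA big1 // => k _; rewrite comp_0S mul0n mulr0. Qed.
Lemma sB_0 N m : sB N.+1 0 m.+1 = (-1)^+m.
Proof.
rewrite /sB big_ord_recl big1 ?addr0 => [|k _]; last by rewrite /= comp_0S mul0n mulr0.
by rewrite /= /comp /= bin0 mulr1 addn0 !exprS; ring.
Qed.
Lemma sC_0 N m : sC N 0 m.+1 = 0.
Proof.
by rewrite /sC big1 // => -[[|k] ?] _ /=; rewrite ?comp_n0 ?comp_0S ?mul0n ?muln0 mulr0.
Qed.

Lemma mainY N n : forall l m, (l + m = n.+1)%N -> (n.+1 < N)%N ->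
  Y n.+1 l = c^+n.+1 *: M (sA N.+1 l m) (sB N.+1 l m) (sC N.+1 l m) (sC N.+1 l m).
Proof.
elim: n => [|n IH] l m.
  case: l => [|[|//]]; case: m => [|[|//]] //= _ HN.
    by rewrite Y_S Y_0 add0r mulr1 sA_0 sB_0 sC_0 Qm_eq expr0 expr1.
  by rewrite Y_S Y_0 (Y_big (n:=0) (l:=1)) // mulr0 addr0 mulr1 sA0 sB0 sC0 Pm_eq expr1.
rewrite Y_S; case: l => [|l]; case: m => [|m] // Hlm HN.
- rewrite (IH 0%N m); [|lia|lia].
  rewrite QY add0r -exprS; congr (_ *: _).
  congr (M _ _ _ _); symmetry; [exact: sA_0 | exact: RB | exact: sC_0 | apply: RS; lia].
- rewrite (IH l 0%N); [|lia|lia].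
  rewrite (Y_big (n:=n.+1) (l:=l.+1)); last by lia.
  rewrite mulr0 addr0 PY -exprS; congr (_ *: _).
  congr (M _ _ _ _); symmetry; [exact: RA | exact: sB0 | apply: RC; lia | exact: sC0].
- rewrite (IH l m.+1); [|lia|lia].
  rewrite (IH l.+1 m); [|lia|lia].
  rewrite PY QY -scalerDr MD -exprS; congr (_ *: _).
  rewrite !(addr0, add0r).
  congr (M _ _ _ _); symmetry; [exact: RA | exact: RB | apply: RC; lia | apply: RS; lia].
Qed.

Lemma sum_shift N K (f : nat -> R) : (K < N)%N -> f 0%N = 0 ->
  (forall k, (K < k)%N -> f k = 0) ->
  \sum_(k < N) f k = \sum_(1 <= g < K.+1) f g.
Proof.
move=> HK f0 fk.
rewrite -(big_mkord xpredT f) (big_cat_nat _ (n:=K.+1)) //=.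
rewrite [X in _ + X]big1_seq ?addr0; last first.
  by move=> k /andP[_]; rewrite mem_index_iota => /andP[H _]; exact: fk.
by rewrite big_nat_recl // f0 add0r big_add1.
Qed.

Lemma binr l g : (0 < g)%N -> (g <= l)%N ->
  ('C(l.-1, g.-1))%:R * ((l - g)%:R / g%:R) = ('C(l.-1, g))%:R :> R.
Proof.
case: g => [//|g] _; case: l => [//|l] Hgl /=.
have Hg : (g.+1%:R : R) != 0 by rewrite pnatr_eq0.
rewrite subSS mulrA -natrM mulnC -mul_bin_left natrM mulrC mulrA mulVf // mul1r.
by [].
Qed.

Lemma Mlin a b r s : M a b r s = a *: M 1 0 0 0 + b *: M 0 1 0 0 + r *: M 0 0 1 0 + s *: M 0 0 0 1.
Proof. ent; ring. Qed.

Lemma sumM (I : Type) (rr : seq I) (P : pred I) (f g h k : I -> R) :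
  \sum_(i <- rr | P i) M (f i) (g i) (h i) (k i) =
  M (\sum_(i <- rr | P i) f i) (\sum_(i <- rr | P i) g i) (\sum_(i <- rr | P i) h i) (\sum_(i <- rr | P i) k i).
Proof.
under eq_bigr do rewrite Mlin.
by rewrite !big_split /= -!scaler_suml -Mlin.
Qed.

Lemma slotA N l m : (0 < l)%N -> (0 < m)%N -> (minn l m < N)%N ->
  sA N l m = (-1)^+m * \sum_(1 <= g < (minn l m).+1) ((-1)^+g * ('C(l.-1,g) * 'C(m.-1,g.-1))%:R).
Proof.
move=> Hl Hm HN.
rewrite /sA (sum_shift (K := minn l m) (f := fun k => (-1)^+(m+k) * (comp l k.+1 * comp m k)%:R)) //.
- clear HN; rewrite mulr_sumr; apply: eq_big_nat => g /andP[g1 _].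
  case: g g1 => [//|g] _; case: l Hl => [//|l] _; case: m Hm => [//|m] _.
  by rewrite /comp /= exprD mulrA.
- by clear HN; case: m Hm => [//|m] _; rewrite comp_n0 muln0 mulr0.
- move=> k Hk; case: (leqP l k) => H.
    by rewrite (comp_big (n:=l) (k:=k.+1)) ?mul0n ?mulr0.
  by rewrite (comp_big (n:=m) (k:=k)) ?muln0 ?mulr0 //; lia.
Qed.

Lemma slotB N l m : (0 < l)%N -> (0 < m)%N -> (minn l m < N)%N ->
  sB N l m = (-1)^+m * \sum_(1 <= g < (minn l m).+1) (- ((-1)^+g * ('C(l.-1,g.-1) * 'C(m.-1,g))%:R)).
Proof.
move=> Hl Hm HN.
rewrite /sB (sum_shift (K := minn l m) (f := fun k => (-1)^+(m+k).+1 * (comp l k * comp m k.+1)%:R)) //.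
- clear HN; rewrite mulr_sumr; apply: eq_big_nat => g /andP[g1 _].
  case: g g1 => [//|g] _; case: l Hl => [//|l] _; case: m Hm => [//|m] _.
  by rewrite /comp /= exprS exprD; ring.
- by clear HN; case: l Hl => [//|l] _; rewrite comp_n0 mul0n mulr0.
- move=> k Hk; case: (leqP m k) => H.
    by rewrite (comp_big (n:=m) (k:=k.+1)) ?muln0 ?mulr0.
  by rewrite (comp_big (n:=l) (k:=k)) ?mul0n ?mulr0 //; lia.
Qed.

Lemma slotC N l m : (0 < l)%N -> (0 < m)%N -> (minn l m < N)%N ->
  sC N l m = (-1)^+m * \sum_(1 <= g < (minn l m).+1) ((-1)^+g * ('C(l.-1,g.-1) * 'C(m.-1,g.-1))%:R).
Proof.
move=> Hl Hm HN.
rewrite /sC (sum_shift (K := minn l m) (f := fun k => (-1)^+(m+k) * (comp l k * comp m k)%:R)) //.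
- clear HN; rewrite mulr_sumr; apply: eq_big_nat => g /andP[g1 _].
  case: g g1 => [//|g] _; case: l Hl => [//|l] _; case: m Hm => [//|m] _.
  by rewrite /comp /= exprD mulrA.
- by clear HN; case: l Hl => [//|l] _; rewrite comp_n0 mul0n mulr0.
- move=> k Hk; case: (ltnP m k) => H.
    by rewrite (comp_big (n:=m) (k:=k)) ?muln0 ?mulr0.
  by rewrite (comp_big (n:=l) (k:=k)) ?mul0n ?mulr0 //; lia.
Qed.

Lemma summand l m g : (0 < g)%N -> (g <= l)%N -> (g <= m)%N ->
  ((-1) ^+ g * ('C(l.-1, g.-1) * 'C(m.-1, g.-1))%:R) *:
    (((l - g)%:R / g%:R) *: Pm R - ((m - g)%:R / g%:R) *: Qm R + Rm R + Sm R)
  = c *: M ((-1)^+g * ('C(l.-1,g) * 'C(m.-1,g.-1))%:R)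
           (- ((-1)^+g * ('C(l.-1,g.-1) * 'C(m.-1,g))%:R))
           ((-1)^+g * ('C(l.-1,g.-1) * 'C(m.-1,g.-1))%:R)
           ((-1)^+g * ('C(l.-1,g.-1) * 'C(m.-1,g.-1))%:R).
Proof.
move=> g0 gl gm.
rewrite !natrM -(binr g0 gl) -(binr g0 gm) Pm_eq Qm_eq Rm_eq Sm_eq.
ent; ring.
Qed.
End S.

Unset Implicit Arguments.
Theorem theorem3 (R : rcfType) (l m : nat) :
  [/\ (0 < minn l m)%N ->
        Xi R l m =
        (isq2 R ^+ (l + m).-1 * (-1) ^+ m) *:
          \sum_(1 <= g < (minn l m).+1)
            ((-1) ^+ g * ('C(l.-1, g.-1) * 'C(m.-1, g.-1))%:R) *:
              (((l - g)%:R / g%:R) *: Pm R - ((m - g)%:R / g%:R) *: Qm R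
               + Rm R + Sm R),
      (0 < l)%N -> m = 0%N -> Xi R l m = isq2 R ^+ l.-1 *: Pm R
    & l = 0%N -> (0 < m)%N ->
        Xi R l m = (isq2 R ^+ m.-1 * (-1) ^+ m.+1) *: Qm R].
Proof.
have XiY : Xi R l m = Y R (l+m) l by [].
split.
- move=> Hmin.
  have Hl : (0 < l)%N by lia.
  have Hm : (0 < m)%N by lia.
  rewrite XiY.
  set n := (l + m).-1.
  have Hn : (l + m = n.+1)%N by rewrite /n; lia.
  rewrite Hn (@mainY R n.+2 n l m Hn) //.
  under eq_big_nat => g /andP[g1 g2].
    rewrite (@summand R l m g g1); [|lia|lia].
  over.
  rewrite -scaler_sumr sumM scalerA !MZ.
  congr (M _ _ _ _);
    rewrite ?(@slotA R n.+3 l m) ?(@slotB R n.+3 l m) ?(@slotC R n.+3 l m) //; try lia;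
    rewrite exprSr; ring.
- move=> Hl Hm0; rewrite XiY Hm0 addn0.
  case: l Hl {XiY} => [//|l] _.
  rewrite (@mainY R l.+2 l l.+1 0) ?addn0 //.
  by rewrite sA0 sB0 sC0 Pm_eq scalerA -exprSr.
- move=> Hl0 Hm; rewrite XiY Hl0 add0n.
  case: m Hm {XiY} => [//|m] _.
  rewrite (@mainY R m.+2 m 0 m.+1) //.
  rewrite sA_0 sB_0 sC_0 Qm_eq scalerA !MZ; congr (M _ _ _ _); rewrite /= !exprS; ring.
Qed.
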